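(* Let $\|\cdot\|$ be a URTC-norm on $\mathbb{R}^2$, let $d>0$, and let $b_1,b_2\in\mathbb{R}^2$ with $\|b_1\|=\|b_2\|=\|b_1-b_2\|=d$. Then the triple $(0,b_1,b_2)$ can be extended to a $d$-probe $(0,b_1,b_2,b_3,c_1,c_2,c_3)$, and in every such $d$-probe necessarily $b_3=b_1+b_2$. Moreover, $b_1+b_2\neq 0$.
   Context: A norm $\|\cdot\|$ on $\mathbb{R}^2$ is called a URTC-norm if for every $a,b\in\mathbb{R}^2$ with $\|a-b\|=1$ the system $\|a-x\|=1$, $\|b-x\|=1$ is satisfied by exactly two points $x\in\mathbb{R}^2$. For $d>0$, a 7-tuple $(a,b_1,b_2,b_3,c_1,c_2,c_3)$ of points of $\mathbb{R}^2$ is a $d$-probe if $d=\|a-b_1\|=\|a-b_2\|=\|b_1-b_2\|=\|b_1-b_3\|=\|b_2-b_3\|=\|a-c_1\|=\|a-c_2\|=\|c_1-c_2\|=\|c_1-c_3\|=\|c_2-c_3\|=\|b_3-c_3\|$. *)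

(* Defs.v *)
From Stdlib Require Import Reals.
Open Scope R_scope.

Definition pt := (R * R)%type.
Definition padd (x y : pt) : pt := (fst x + fst y, snd x + snd y).
Definition psub (x y : pt) : pt := (fst x - fst y, snd x - snd y).
Definition pscale (k : R) (x : pt) : pt := (k * fst x, k * snd x).
Definition p0 : pt := (0, 0).

Definition is_norm (N : pt -> R) : Prop :=
  (forall x, 0 <= N x) /\
  (forall x, N x = 0 -> x = p0) /\
  (forall k x, N (pscale k x) = Rabs k * N x) /\
  (forall x y, N (padd x y) <= N x + N y).

Definition URTC (N : pt -> R) : Prop :=
  forall a b : pt, N (psub a b) = 1 ->
    exists x1 x2 : pt, x1 <> x2 /\
      forall x, (N (psub a x) = 1 /\ N (psub b x) = 1) <-> (x = x1 \/ x = x2).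

Definition probe (N : pt -> R) (d : R) (a b1 b2 b3 c1 c2 c3 : pt) : Prop :=
  d = N (psub a b1) /\ d = N (psub a b2) /\ d = N (psub b1 b2) /\
  d = N (psub b1 b3) /\ d = N (psub b2 b3) /\
  d = N (psub a c1) /\ d = N (psub a c2) /\ d = N (psub c1 c2) /\
  d = N (psub c1 c3) /\ d = N (psub c2 c3) /\
  d = N (psub b3 c3).

(* Main.v *)
Require Import Defs.
From Stdlib Require Import Reals Lra Psatz Ranalysis5.
Open Scope R_scope.

Ltac peq := apply injective_projections; unfold padd, psub, pscale, p0; simpl; field; try lra.

Section Nrm.
Variable N : pt -> R.
Hypothesis HN : is_norm N.

Lemma Nscale k x : N (pscale k x) = Rabs k * N x.
Proof. destruct HN as (_&_&H&_). apply H. Qed.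
Lemma Nge0 x : 0 <= N x.
Proof. destruct HN as (H&_). apply H. Qed.
Lemma Ntri x y : N (padd x y) <= N x + N y.
Proof. destruct HN as (_&_&_&H). apply H. Qed.
Lemma Nzero x : N x = 0 -> x = p0.
Proof. destruct HN as (_&H&_). apply H. Qed.
Lemma Nz0 : N p0 = 0.
Proof. replace p0 with (pscale 0 p0) by peq. rewrite Nscale, Rabs_R0; ring. Qed.
Lemma Nsym x y : N (psub x y) = N (psub y x).
Proof. replace (psub y x) with (pscale (-1) (psub x y)) by peq.
 rewrite Nscale, (Rabs_left (-1)) by lra; ring. Qed.
Lemma Nneg x : N (psub p0 x) = N x.
Proof. replace (psub p0 x) with (pscale (-1) x) by peq.
 rewrite Nscale, (Rabs_left (-1)) by lra; ring. Qed.
Lemma Nposit x : x <> p0 -> 0 < N x.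
Proof. intro H. destruct (Nge0 x) as [h|h]; auto. exfalso; apply H, Nzero; auto. Qed.
Lemma Ntri_sub x y : N x - N y <= N (psub x y).
Proof. replace x with (padd (psub x y) y) at 1 by peq. pose proof (Ntri (psub x y) y). lra. Qed.
Lemma Nabs_sub x y : Rabs (N x - N y) <= N (psub x y).
Proof. apply Rabs_le. pose proof (Ntri_sub x y). pose proof (Ntri_sub y x).
 rewrite Nsym in H0. lra. Qed.
End Nrm.

Lemma three_sol N (HN : is_norm N) (HU : URTC N) d (hd : 0 < d) a b x y z :
  N (psub a b) = d ->
  N (psub a x) = d -> N (psub b x) = d ->
  N (psub a y) = d -> N (psub b y) = d ->
  N (psub a z) = d -> N (psub b z) = d ->
  x = y \/ x = z \/ y = z.
Proof.
  intros Hab Hax Hbx Hay Hby Haz Hbz.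
  assert (Hs : forall p q, N (psub (pscale (/d) p) (pscale (/d) q)) = / d * N (psub p q)).
  { intros p q. replace (psub (pscale (/d) p) (pscale (/d) q)) with (pscale (/d) (psub p q)) by peq.
    rewrite Nscale by auto. rewrite Rabs_right; auto. apply Rle_ge; left; apply Rinv_0_lt_compat; auto. }
  destruct (HU (pscale (/d) a) (pscale (/d) b)) as (x1 & x2 & Hne & Hiff).
  { rewrite Hs, Hab. field; lra. }
  assert (Hin : forall q, N (psub a q) = d -> N (psub b q) = d ->
     pscale (/d) q = x1 \/ pscale (/d) q = x2).
  { intros q h1 h2. apply Hiff. rewrite !Hs, h1, h2. split; field; lra. }
  assert (Hinj : forall p q, pscale (/d) p = pscale (/d) q -> p = q).
  { intros p q H. replace p with (pscale d (pscale (/d) p)) by peq.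
    rewrite H. peq. }
  destruct (Hin x Hax Hbx) as [e1|e1]; destruct (Hin y Hay Hby) as [e2|e2];
  destruct (Hin z Haz Hbz) as [e3|e3];
  first [left; apply Hinj; congruence | right; left; apply Hinj; congruence
        | right; right; apply Hinj; congruence].
Qed.

Lemma sum_ne0 N (HN : is_norm N) d (hd : 0 < d) x y :
  N x = d -> N (psub x y) = d -> padd x y <> p0.
Proof.
  intros h1 h2 H.
  assert (E1 : fst x + fst y = 0) by (apply (f_equal fst) in H; exact H).
  assert (E2 : snd x + snd y = 0) by (apply (f_equal snd) in H; exact H).
  assert (psub x y = pscale 2 x).
  { apply injective_projections; unfold psub, pscale; simpl; lra. }
  rewrite H0, Nscale, h1 in h2 by auto. rewrite Rabs_right in h2 by lra. lra.
Qed.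

Lemma part2 N (HN : is_norm N) (HU : URTC N) d (hd : 0 < d) b1 b2 b3 c1 c2 c3 :
  probe N d p0 b1 b2 b3 c1 c2 c3 -> b3 = padd b1 b2.
Proof.
  unfold probe. rewrite !Nneg by auto.
  intros (e1&e2&e3&e4&e5&e6&e7&e8&e9&e10&e11).
  assert (Hnb : padd b1 b2 <> p0) by (apply (sum_ne0 N HN d); auto).
  assert (Hnc : padd c1 c2 <> p0) by (apply (sum_ne0 N HN d); auto).
  assert (Nb : N (psub b1 p0) = d) by (rewrite Nsym, Nneg; auto).
  assert (Nb2 : N (psub b2 p0) = d) by (rewrite Nsym, Nneg; auto).
  assert (Nc : N (psub c1 p0) = d) by (rewrite Nsym, Nneg; auto).
  assert (Nc2 : N (psub c2 p0) = d) by (rewrite Nsym, Nneg; auto).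
  assert (S1 : N (psub b1 (padd b1 b2)) = d).
  { replace (psub b1 (padd b1 b2)) with (psub p0 b2) by peq. rewrite Nneg; auto. }
  assert (S2 : N (psub b2 (padd b1 b2)) = d).
  { replace (psub b2 (padd b1 b2)) with (psub p0 b1) by peq. rewrite Nneg; auto. }
  assert (T1 : N (psub c1 (padd c1 c2)) = d).
  { replace (psub c1 (padd c1 c2)) with (psub p0 c2) by peq. rewrite Nneg; auto. }
  assert (T2 : N (psub c2 (padd c1 c2)) = d).
  { replace (psub c2 (padd c1 c2)) with (psub p0 c1) by peq. rewrite Nneg; auto. }
  destruct (three_sol N HN HU d hd b1 b2 b3 p0 (padd b1 b2)) as [H|[H|H]]; auto;
    try (exfalso; apply Hnb; auto; fail).
  subst b3. exfalso.
  assert (Nc3 : N c3 = d) by (rewrite Nneg in e11; auto).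
  assert (c3 <> p0) by (intro; subst; rewrite (Nz0 N HN) in Nc3; lra).
  destruct (three_sol N HN HU d hd c1 c2 c3 p0 (padd c1 c2)) as [H1|[H1|H1]]; auto;
    try (apply Hnc; auto; fail).
  subst c3.
  (* triangle c1, c1+c2 : solutions p0, c2, 2c1+c2 *)
  assert (Hc1 : c1 <> p0) by (intro; subst; rewrite (Nz0 N HN) in e6; lra).
  assert (Hc2 : c2 <> p0) by (intro; subst; rewrite (Nz0 N HN) in e7; lra).
  set (z := padd c1 (padd c1 c2)).
  assert (z <> p0).
  { unfold z; intro Hz. apply (sum_ne0 N HN d hd c1 (padd c1 c2)); auto.
    }
  assert (c2 <> z).
  { unfold z; intro Hz. apply Hc1. apply injective_projections;
    [apply (f_equal fst) in Hz|apply (f_equal snd) in Hz];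
    unfold padd in *; simpl in *; lra. }
  destruct (three_sol N HN HU d hd c1 (padd c1 c2) p0 c2 z) as [H2|[H2|H2]]; auto.
  all: try (rewrite Nsym, (Nneg N HN); auto; fail).
  all: try (rewrite (Nneg N HN); auto; fail).
  - replace (psub (padd c1 c2) c2) with c1 by peq; auto.
  - unfold z. replace (psub c1 (padd c1 (padd c1 c2))) with (psub p0 (padd c1 c2)) by peq.
    rewrite (Nneg N HN); auto.
  - unfold z. replace (psub (padd c1 c2) (padd c1 (padd c1 c2))) with (psub p0 c1) by peq.
    rewrite (Nneg N HN); auto.
Qed.

Definition pcont (F : R -> pt) t :=
  continuity_pt (fun x => fst (F x)) t /\ continuity_pt (fun x => snd (F x)) t.

Lemma cp_plus f g t : continuity_pt f t -> continuity_pt g t -> continuity_pt (fun x => f x + g x) t.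
Proof. intros; apply (continuity_pt_plus f g t); auto. Qed.
Lemma cp_minus f g t : continuity_pt f t -> continuity_pt g t -> continuity_pt (fun x => f x - g x) t.
Proof. intros; apply (continuity_pt_minus f g t); auto. Qed.
Lemma cp_mult f g t : continuity_pt f t -> continuity_pt g t -> continuity_pt (fun x => f x * g x) t.
Proof. intros; apply (continuity_pt_mult f g t); auto. Qed.
Lemma cp_div f g t : continuity_pt f t -> continuity_pt g t -> g t <> 0 -> continuity_pt (fun x => f x / g x) t.
Proof. intros; apply (continuity_pt_div f g t); auto. Qed.
Lemma cp_const c t : continuity_pt (fun _ => c) t.
Proof. apply (continuity_pt_const (fun _ => c)). intros a b; auto. Qed.
Lemma cp_opp f t : continuity_pt f t -> continuity_pt (fun x => - f x) t.
Proof. intros; apply (continuity_pt_opp f t); auto. Qed.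
Lemma cp_id t : continuity_pt (fun x => x) t.
Proof. apply derivable_continuous_pt, derivable_pt_id. Qed.

Lemma pc_const c t : pcont (fun _ => c) t.
Proof. split; apply cp_const. Qed.
Lemma pc_add F G t : pcont F t -> pcont G t -> pcont (fun x => padd (F x) (G x)) t.
Proof. intros [] []; unfold padd; split; simpl; apply cp_plus; auto. Qed.
Lemma pc_sub F G t : pcont F t -> pcont G t -> pcont (fun x => psub (F x) (G x)) t.
Proof. intros [] []; unfold psub; split; simpl; apply cp_minus; auto. Qed.
Lemma pc_scale k F t : continuity_pt k t -> pcont F t -> pcont (fun x => pscale (k x) (F x)) t.
Proof. intros ? [] ; unfold pscale; split; simpl; apply cp_mult; auto. Qed.

Definition J (x : pt) : pt := (- snd x, fst x).
Lemma pc_J F t : pcont F t -> pcont (fun x => J (F x)) t.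
Proof. intros [] ; unfold J; split; simpl; auto. apply cp_opp; auto. Qed.

Lemma Nbound N (HN : is_norm N) z :
  N z <= Rabs (fst z) * N (1,0) + Rabs (snd z) * N (0,1).
Proof.
  replace z with (padd (pscale (fst z) (1,0)) (pscale (snd z) (0,1))) at 1.
  - eapply Rle_trans; [apply Ntri; auto|]. rewrite !Nscale; auto. lra.
  - apply injective_projections; unfold padd, pscale; simpl; ring.
Qed.

Lemma Ncont N (HN : is_norm N) F t : pcont F t -> continuity_pt (fun x => N (F x)) t.
Proof.
  intros [H1 H2].
  unfold continuity_pt, continue_in, limit1_in, limit_in in *; simpl in *; unfold R_dist in *.
  intros eps Heps.
  pose proof (Nge0 N HN (1,0)). pose proof (Nge0 N HN (0,1)).
  set (K := N (1,0) + N (0,1) + 1).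
  assert (HK : 0 < K) by (unfold K; lra).
  destruct (H1 (eps / K)) as (a1 & Ha1 & Hd1). { apply Rdiv_lt_0_compat; lra. }
  destruct (H2 (eps / K)) as (a2 & Ha2 & Hd2). { apply Rdiv_lt_0_compat; lra. }
  exists (Rmin a1 a2). split. { apply Rmin_glb_lt; auto. }
  intros x [Hx Hxd].
  assert (A1 : Rabs (fst (F x) - fst (F t)) < eps / K).
  { apply Hd1. split; auto. eapply Rlt_le_trans; [exact Hxd| apply Rmin_l]. }
  assert (A2 : Rabs (snd (F x) - snd (F t)) < eps / K).
  { apply Hd2. split; auto. eapply Rlt_le_trans; [exact Hxd| apply Rmin_r]. }
  eapply Rle_lt_trans; [apply Nabs_sub; auto|].
  eapply Rle_lt_trans; [apply Nbound; auto|]. unfold psub; simpl.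
  assert (eps = eps / K * K) by (field; lra).
  pose proof (Rabs_pos (fst (F x) - fst (F t))). pose proof (Rabs_pos (snd (F x) - snd (F t))).
  set (e := eps / K) in *.
  assert (0 < e) by (unfold e; apply Rdiv_lt_0_compat; lra).
  apply Rle_lt_trans with (e * N (1,0) + e * N (0,1)).
  - apply Rplus_le_compat; apply Rmult_le_compat_r; lra.
  - assert (e * K = eps) by (unfold e; field; lra).
    replace (e * N (1,0) + e * N (0,1)) with (e * K - e) by (unfold K; ring). lra.
Qed.

Lemma below_neg (g : R -> R) s0 : (forall s, continuity_pt g s) -> g 0 < 0 ->
  g s0 = 0 -> (forall s, 0<=s<=1 -> g s = 0 -> s = s0) ->
  forall l, 0 <= l < s0 -> s0 <= 1 -> g l < 0.
Proof.
  intros Hc H0 Hs0 Hu l Hl Hs1.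
  destruct (Rtotal_order (g l) 0) as [h|[h|h]]; auto.
  - apply Hu in h; lra.
  - assert (0 < l). { destruct (Req_dec l 0); [subst; lra|lra]. }
    destruct (IVT_interv g 0 l (fun a _ => Hc a) H H0 h) as (z & Hz & Hgz).
    apply Hu in Hgz; lra.
Qed.

Lemma above_pos (g : R -> R) s0 : (forall s, continuity_pt g s) -> 0 < g 1 ->
  g s0 = 0 -> (forall s, 0<=s<=1 -> g s = 0 -> s = s0) ->
  forall h, s0 < h <= 1 -> 0 <= s0 -> 0 < g h.
Proof.
  intros Hc H1 Hs0 Hu l Hl Hs1.
  destruct (Rtotal_order (g l) 0) as [h|[h|h]]; auto.
  - assert (l < 1). { destruct (Req_dec l 1); [subst; lra|lra]. }
    destruct (IVT_interv g l 1 (fun a _ => Hc a) H h H1) as (z & Hz & Hgz).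
    apply Hu in Hgz; lra.
  - apply Hu in h; lra.
Qed.

Lemma root_cont (g : R -> R -> R) sig t0 :
 (forall s, continuity_pt (fun t => g t s) t0) ->
 (forall t s, continuity_pt (g t) s) ->
 (forall t, g t 0 < 0) -> (forall t, 0 < g t 1) ->
 (forall t, 0 <= sig t <= 1 /\ g t (sig t) = 0) ->
 (forall t s, 0 <= s <= 1 -> g t s = 0 -> s = sig t) ->
 continuity_pt sig t0.
Proof.
  intros Hct Hcs Hg0 Hg1 Hsig Hu.
  set (s0 := sig t0).
  destruct (Hsig t0) as [Hr Hz]. fold s0 in Hr, Hz.
  assert (s0 <> 0). { intro E. rewrite E in Hz. specialize (Hg0 t0). lra. }
  assert (s0 <> 1). { intro E. rewrite E in Hz. specialize (Hg1 t0). lra. }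
  unfold continuity_pt, continue_in, limit1_in, limit_in; simpl; unfold R_dist.
  intros eps Heps.
  set (l := Rmax 0 (s0 - eps/2)). set (h := Rmin 1 (s0 + eps/2)).
  assert (L1 : 0 <= l) by apply Rmax_l.
  assert (L2 : s0 - eps/2 <= l) by apply Rmax_r.
  assert (L3 : l < s0) by (apply Rmax_lub_lt; lra).
  assert (H1' : h <= 1) by apply Rmin_l.
  assert (H2' : h <= s0 + eps/2) by apply Rmin_r.
  assert (H3' : s0 < h) by (apply Rmin_glb_lt; lra).
  assert (Gl : g t0 l < 0).
  { apply (below_neg (g t0) s0); auto. intros; apply Hu; auto. lra. }
  assert (Gh : 0 < g t0 h).
  { apply (above_pos (g t0) s0); auto. intros; apply Hu; auto. lra. }
  pose proof (Hct l) as Cl. pose proof (Hct h) as Ch.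
  unfold continuity_pt, continue_in, limit1_in, limit_in in Cl, Ch; simpl in Cl, Ch;
   unfold R_dist in Cl, Ch.
  destruct (Cl (- g t0 l)) as (d1 & Hd1 & Q1); [lra|].
  destruct (Ch (g t0 h)) as (d2 & Hd2 & Q2); [lra|].
  exists (Rmin d1 d2). split; [apply Rmin_glb_lt; auto|].
  intros x [Dx Hx].
  assert (Q1' := Q1 x (conj Dx (Rlt_le_trans _ _ _ Hx (Rmin_l _ _)))).
  assert (Q2' := Q2 x (conj Dx (Rlt_le_trans _ _ _ Hx (Rmin_r _ _)))).
  apply Rabs_def2 in Q1'. apply Rabs_def2 in Q2'. destruct Q1', Q2'.
  assert (lh : l < h) by lra.
  assert (Gxl : g x l < 0) by lra. assert (Gxh : 0 < g x h) by lra.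
  destruct (IVT_interv (g x) l h (fun a _ => Hcs x a) lh Gxl Gxh) as (z & Hz' & Hgz).
  apply Hu in Hgz; [|lra]. rewrite <- Hgz. fold s0. apply Rabs_def1; lra.
Qed.

Definition det (x y : pt) := fst x * snd y - snd x * fst y.

Ltac pc := repeat first [ apply pc_add | apply pc_sub | apply pc_scale | apply pc_J
   | apply pc_const | apply cp_div | apply cp_minus | apply cp_plus | apply cp_mult | apply cp_opp
   | apply cp_const | apply cp_id | apply Ncont; [assumption|] ].

Lemma pos_unique N (HN : is_norm N) (HU : URTC N) d (hd : 0 < d) c x y :
  N c = d -> N x = d -> N (psub c x) = d -> 0 < det c x ->
  N y = d -> N (psub c y) = d -> 0 < det c y -> x = y.
Proof.
  intros Hc Hx Hcx Dx Hy Hcy Dy.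
  assert (Nz : forall q, N (psub p0 q) = N q) by (intro; apply Nneg; auto).
  destruct (three_sol N HN HU d hd c p0 x y (psub c x)) as [E|[E|E]]; auto.
  - rewrite Nsym, Nz; auto.
  - rewrite Nz; auto.
  - rewrite Nz; auto.
  - replace (psub c (psub c x)) with x by peq. auto.
  - rewrite Nz; auto.
  - exfalso. assert (det c x = det c (psub c x)) by (rewrite <- E; auto).
    unfold det, psub in H; simpl in H. unfold det in Dx. nra.
  - exfalso. assert (det c y = det c (psub c x)) by (rewrite <- E; auto).
    unfold det, psub in H; simpl in H. unfold det in Dx, Dy. nra.
Qed.

Lemma Nnorm N (HN : is_norm N) d (hd : 0 < d) x : x <> p0 -> N (pscale (d / N x) x) = d.
Proof.
  intro H. pose proof (Nposit N HN x H). rewrite Nscale by auto.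
  rewrite Rabs_right. field; lra. apply Rle_ge, Rlt_le, Rdiv_lt_0_compat; lra.
Qed.

Lemma pt_ne0 x : 0 < fst x * fst x + snd x * snd x -> x <> p0.
Proof. intros H E. rewrite E in H. unfold p0 in H; simpl in H. lra. Qed.

Lemma pt_sq x : x <> p0 -> 0 < fst x * fst x + snd x * snd x.
Proof.
  intros H. destruct (Req_dec (fst x) 0); destruct (Req_dec (snd x) 0); try nra.
  exfalso; apply H. apply injective_projections; unfold p0; simpl; auto.
Qed.

Section Main.
Variables (N : pt -> R) (HN : is_norm N) (HU : URTC N) (d : R) (hd : 0 < d) (u v : pt).
Hypotheses (hu : N u = d) (hv : N v = d) (huv : N (psub u v) = d) (hdet : 0 < det u v).

Definition pp t := padd (pscale (1-t) u) (pscale t v).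
Lemma pp_ne0 t : pp t <> p0.
Proof.
  intro E. assert (E1 := f_equal fst E). assert (E2 := f_equal snd E).
  unfold pp, padd, pscale, p0 in E1, E2; simpl in E1, E2. unfold det in hdet.
  assert (H : t * (fst u * snd v - snd u * fst v) =
     fst u * ((1-t)*snd u + t*snd v) - snd u * ((1-t)*fst u + t*fst v)) by ring.
  rewrite E1, E2 in H. replace (fst u * 0 - snd u * 0) with 0 in H by ring.
  apply Rmult_integral in H as [H|H]; [|lra]. subst t.
  assert (Hu0 : u = p0) by (apply injective_projections; unfold p0; simpl; lra).
  rewrite Hu0, Nz0 in hu; auto. lra.
Qed.
Lemma npp t : 0 < N (pp t).
Proof. apply Nposit; auto. apply pp_ne0. Qed.

Definition c1 t := pscale (d / N (pp t)) (pp t).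
Lemma Nc1 t : N (c1 t) = d.
Proof. apply Nnorm; auto. apply pp_ne0. Qed.

Definition w t s := padd (pscale (1-2*s) (pp t)) (pscale (4*s*(1-s)) (J (pp t))).
Lemma w_ne0 t s : w t s <> p0.
Proof.
  intro E. pose proof (pt_sq _ (pp_ne0 t)) as P. unfold w in E.
  destruct (pp t) as [a b]. simpl in P.
  assert (E1 := f_equal fst E). assert (E2 := f_equal snd E).
  unfold J, padd, pscale, p0 in E1, E2; simpl in E1, E2.
  assert (H : (1-2*s) * (a*a+b*b) = a * ((1 - 2 * s) * a + 4 * s * (1 - s) * - b)
     + b * ((1 - 2 * s) * b + 4 * s * (1 - s) * a)) by ring.
  assert (H0 : (4*s*(1-s)) * (a*a+b*b) = - b * ((1 - 2 * s) * a + 4 * s * (1 - s) * - b)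
     + a * ((1 - 2 * s) * b + 4 * s * (1 - s) * a)) by ring.
  rewrite E1, E2 in H, H0. replace (a * 0 + b * 0) with 0 in H by ring. replace (- b * 0 + a * 0) with 0 in H0 by ring.
  apply Rmult_integral in H as [H|H]; [|lra].
  apply Rmult_integral in H0 as [H0|H0]; [|lra]. nra.
Qed.
Lemma nw t s : 0 < N (w t s).
Proof. apply Nposit; auto. apply w_ne0. Qed.

Definition c2 t s := pscale (d / N (w t s)) (w t s).
Lemma Nc2 t s : N (c2 t s) = d.
Proof. apply Nnorm; auto. apply w_ne0. Qed.

Definition g t s := N (psub (c1 t) (c2 t s)) - d.

Lemma pc_pp t : pcont pp t.
Proof. unfold pp. pc. Qed.


Ltac pcm := repeat first [ apply pc_pp | apply pc_add | apply pc_sub | apply pc_scale | apply pc_J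
   | apply pc_const | apply cp_div | apply cp_minus | apply cp_plus | apply cp_mult | apply cp_opp
   | apply cp_const | apply cp_id | apply Ncont; [assumption|] ];
   try (apply Rgt_not_eq; first [apply npp | apply nw]).

Lemma gcont_t s t : continuity_pt (fun t => g t s) t.
Proof. unfold g, c2, w, c1. pcm. Qed.
Lemma gcont_s t s : continuity_pt (g t) s.
Proof. change (continuity_pt (fun s => N (psub (c1 t) (c2 t s)) - d) s). unfold c2, w. pcm. Qed.


Lemma g0 t : g t 0 < 0.
Proof.
  unfold g, c2, c1. assert (E : w t 0 = pp t) by (unfold w, J; peq).
  rewrite E. replace (psub _ _) with p0 by (apply injective_projections; unfold psub, p0; simpl; ring). rewrite Nz0; auto. lra.
Qed.

Lemma g1 t : 0 < g t 1.
Proof.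
  unfold g, c2, c1. assert (E : w t 1 = pscale (-1) (pp t)) by (unfold w, J; peq).
  rewrite E. rewrite Nscale; auto. rewrite (Rabs_left (-1)) by lra.
  pose proof (npp t).
  replace (psub _ _) with (pscale 2 (pscale (d / N (pp t)) (pp t))) by peq.
  rewrite Nscale, Nnorm; auto. 2: apply pp_ne0. rewrite Rabs_right; lra.
Qed.

Lemma det_scale a b x y : det (pscale a x) (pscale b y) = a * b * det x y.
Proof. unfold det, pscale; simpl; ring. Qed.

Lemma det_c12 t s : 0 < s < 1 -> 0 < det (c1 t) (c2 t s).
Proof.
  intros Hs. unfold c1, c2. rewrite det_scale.
  pose proof (npp t). pose proof (nw t s). pose proof (pt_sq _ (pp_ne0 t)).
  assert (E : det (pp t) (w t s) = 4*s*(1-s) * (fst (pp t) * fst (pp t) + snd (pp t) * snd (pp t)))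
    by (unfold det, w, J, padd, pscale; simpl; ring).
  rewrite E. apply Rmult_lt_0_compat. apply Rmult_lt_0_compat; apply Rdiv_lt_0_compat; lra.
  apply Rmult_lt_0_compat; nra.
Qed.

Lemma sig_ex t : {s | 0 <= s <= 1 /\ g t s = 0}.
Proof.
  destruct (IVT_interv (g t) 0 1 (fun a _ => gcont_s t a) Rlt_0_1 (g0 t) (g1 t)) as (z & Hz & Hg).
  exists z; auto.
Qed.
Definition sigma t := proj1_sig (sig_ex t).
Lemma sigma_spec t : 0 <= sigma t <= 1 /\ g t (sigma t) = 0.
Proof. unfold sigma; destruct (sig_ex t); auto. Qed.

Lemma open01 t s : 0 <= s <= 1 -> g t s = 0 -> 0 < s < 1.
Proof.
  intros Hs Hg. pose proof (g0 t). pose proof (g1 t).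
  destruct (Req_dec s 0). { subst; lra. } destruct (Req_dec s 1). { subst; lra. } lra.
Qed.

Lemma sol_of_g t s : g t s = 0 -> N (psub (c1 t) (c2 t s)) = d.
Proof. unfold g; intros; lra. Qed.

Lemma g_unique t s : 0 <= s <= 1 -> g t s = 0 -> s = sigma t.
Proof.
  intros Hs Hg. destruct (sigma_spec t) as [Hs' Hg'].
  pose proof (open01 _ _ Hs Hg). pose proof (open01 _ _ Hs' Hg').
  set (s' := sigma t) in *.
  assert (E : c2 t s = c2 t s').
  { apply (pos_unique N HN HU d hd (c1 t)); try apply Nc1; try apply Nc2;
      try apply sol_of_g; auto; apply det_c12; auto. }
  assert (D0 : det (c2 t s) (c2 t s') = 0) by (rewrite E; unfold det; ring).
  unfold c2 in D0. rewrite det_scale in D0.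
  pose proof (nw t s). pose proof (nw t s'). pose proof (pt_sq _ (pp_ne0 t)).
  assert (E2 : det (w t s) (w t s') = 4 * (s' - s) * ((1-s)*(1-s') + s*s') *
     (fst (pp t) * fst (pp t) + snd (pp t) * snd (pp t)))
    by (unfold det, w, J, padd, pscale; simpl; ring).
  rewrite E2 in D0.
  apply Rmult_integral in D0 as [D0|D0].
  - exfalso. assert (0 < d / N (w t s) * (d / N (w t s'))).
    { apply Rmult_lt_0_compat; apply Rdiv_lt_0_compat; lra. } lra.
  - apply Rmult_integral in D0 as [D0|D0]; [|lra].
    apply Rmult_integral in D0 as [D0|D0]; [lra|nra].
Qed.

Lemma sigma_cont t : continuity_pt sigma t.
Proof.
  apply (root_cont g sigma t).
  - intro s; apply gcont_t.
  - apply gcont_s.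
  - apply g0.
  - apply g1.
  - apply sigma_spec.
  - apply g_unique.
Qed.

Definition f t := N (psub (padd u v) (padd (c1 t) (c2 t (sigma t)))) - d.

Lemma fcont t : continuity_pt f t.
Proof.
  unfold f, c2, w, c1.
  repeat first [ apply pc_pp | apply pc_add | apply pc_sub | apply pc_scale | apply pc_J
   | apply pc_const | apply cp_div | apply cp_minus | apply cp_plus | apply cp_mult | apply cp_opp
   | apply cp_const | apply cp_id | apply sigma_cont | apply Ncont; [assumption|] ];
   try (apply Rgt_not_eq; first [apply npp | apply nw]).
Qed.

Lemma c1_0 : c1 0 = u.
Proof.
  unfold c1. assert (E : pp 0 = u) by (unfold pp; peq). rewrite E, hu.
  apply injective_projections; unfold pscale; simpl; field; lra.
Qed.
Lemma c1_1 : c1 1 = v.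
Proof.
  unfold c1. assert (E : pp 1 = v) by (unfold pp; peq). rewrite E, hv.
  apply injective_projections; unfold pscale; simpl; field; lra.
Qed.

Lemma f0 : f 0 < 0.
Proof.
  destruct (sigma_spec 0) as [Hs Hg]. pose proof (open01 _ _ Hs Hg).
  assert (E : c2 0 (sigma 0) = v).
  { symmetry. apply (pos_unique N HN HU d hd u); auto.
    all: try apply Nc2.
    - rewrite <- c1_0. apply sol_of_g; auto.
    - rewrite <- c1_0. apply det_c12; auto. }
  unfold f. rewrite E, c1_0. replace (psub _ _) with p0
    by (apply injective_projections; unfold psub, padd, p0; simpl; ring).
  rewrite Nz0; auto. lra.
Qed.

Lemma f1 : 0 <= f 1.
Proof.
  destruct (sigma_spec 1) as [Hs Hg]. pose proof (open01 _ _ Hs Hg).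
  assert (E : c2 1 (sigma 1) = psub v u).
  { symmetry. apply (pos_unique N HN HU d hd v); auto.
    all: try apply Nc2.
    - rewrite Nsym; auto.
    - replace (psub v (psub v u)) with u by peq. auto.
    - unfold det, psub in *; simpl; nra.
    - rewrite <- c1_1. apply sol_of_g; auto.
    - rewrite <- c1_1. apply det_c12; auto. }
  unfold f. rewrite E, c1_1.
  replace (psub (padd u v) (padd v (psub v u))) with (psub (pscale 2 u) v) by peq.
  pose proof (Ntri_sub N HN (pscale 2 u) v). rewrite Nscale, hu, hv in H0; auto.
  rewrite Rabs_right in H0; lra.
Qed.

Lemma exists_tri : exists x y, N x = d /\ N y = d /\ N (psub x y) = d /\ N (psub (padd u v) (padd x y)) = d.
Proof.
  assert (Hz : exists t, f t = 0).
  { destruct f1 as [H|H].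
    - destruct (IVT_interv f 0 1 (fun a _ => fcont a) Rlt_0_1 f0 H) as (z & _ & Hz).
      eauto.
    - eauto. }
  destruct Hz as [t Ht]. exists (c1 t), (c2 t (sigma t)).
  destruct (sigma_spec t) as [_ Hg].
  split; [apply Nc1|]. split; [apply Nc2|]. split; [apply sol_of_g; auto|].
  unfold f in Ht. lra.
Qed.

End Main.

Lemma det_ne0 N (HN : is_norm N) d (hd : 0 < d) u v :
  N u = d -> N v = d -> N (psub u v) = d -> det u v <> 0.
Proof.
  intros hu hv huv Hd.
  assert (Hu : u <> p0) by (intro E; rewrite E, Nz0 in hu; auto; lra).
  pose proof (pt_sq _ Hu) as P.
  set (q := fst u * fst u + snd u * snd u) in *.
  set (k := (fst u * fst v + snd u * snd v) / q).
  unfold det in Hd.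
  assert (Ev : v = pscale k u).
  { assert (A1 : fst v * q - (fst u * fst v + snd u * snd v) * fst u =
       - snd u * (fst u * snd v - snd u * fst v)) by (unfold q; ring).
    assert (A2 : snd v * q - (fst u * fst v + snd u * snd v) * snd u =
       fst u * (fst u * snd v - snd u * fst v)) by (unfold q; ring).
    rewrite Hd in A1, A2.
    apply injective_projections; unfold pscale, k; simpl.
    - apply (Rmult_eq_reg_r q); [|lra]. field_simplify; [lra|lra].
    - apply (Rmult_eq_reg_r q); [|lra]. field_simplify; [lra|lra]. }
  assert (Euv : psub u v = pscale (1 - k) u) by (rewrite Ev; peq).
  rewrite Ev, Nscale, hu in hv by auto. rewrite Euv, Nscale, hu in huv by auto.
  assert (Rabs k = 1) by (apply (Rmult_eq_reg_r d); lra).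
  assert (Rabs (1 - k) = 1) by (apply (Rmult_eq_reg_r d); lra).
  revert H H0. unfold Rabs; destruct (Rcase_abs k); destruct (Rcase_abs (1-k)); lra.
Qed.

Theorem lemma4 (N : pt -> R) (HN : is_norm N) (HU : URTC N)
  (d : R) (hd : 0 < d) (b1 b2 : pt)
  (h1 : N b1 = d) (h2 : N b2 = d) (h12 : N (psub b1 b2) = d) :
  (exists b3 c1 c2 c3 : pt, probe N d p0 b1 b2 b3 c1 c2 c3) /\
  (forall b3 c1 c2 c3 : pt, probe N d p0 b1 b2 b3 c1 c2 c3 -> b3 = padd b1 b2) /\
  padd b1 b2 <> p0.
Proof.
  split; [|split].
  - assert (Hex : exists x y, N x = d /\ N y = d /\ N (psub x y) = d /\
       N (psub (padd b1 b2) (padd x y)) = d).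
    { pose proof (det_ne0 N HN d hd b1 b2 h1 h2 h12) as Hd.
      destruct (Rtotal_order (det b1 b2) 0) as [Hl|[He|Hg]]; [|contradiction|].
      - destruct (exists_tri N HN HU d hd b2 b1 h2 h1) as (x & y & ?).
        + rewrite Nsym; auto.
        + unfold det in *; lra.
        + exists x, y. replace (padd b1 b2) with (padd b2 b1) by peq. auto.
      - apply exists_tri; auto. }
    destruct Hex as (x & y & Hx & Hy & Hxy & Hs).
    exists (padd b1 b2), x, y, (padd x y).
    unfold probe. rewrite !(Nneg N HN).
    replace (psub b1 (padd b1 b2)) with (psub p0 b2) by peq.
    replace (psub b2 (padd b1 b2)) with (psub p0 b1) by peq.
    replace (psub x (padd x y)) with (psub p0 y) by peq.
    replace (psub y (padd x y)) with (psub p0 x) by peq.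
    rewrite !(Nneg N HN). repeat split; auto.
  - intros. eapply part2; eauto.
  - apply (sum_ne0 N HN d hd); auto.
Qed.
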